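(* Let $C\ge 2$ and let $w^*_{1},\dots,w^*_{C}\in\mathbb{R}^d/\mathbb{R}\mathbf{1}$ (one weight vector per class). Let $$\mathcal{B}=\{x\in\mathbb{R}^d/\mathbb{R}\mathbf{1}:\ d_{\rm tr}(x,-w^*_{j})=d_{\rm tr}(x,-w^*_{j'})\text{ for some } j\neq j'\}.$$ Then $\mathcal{B}$ contains no full-dimensional cell (i.e. has empty interior in $\mathbb{R}^d/\mathbb{R}\mathbf{1}\cong\mathbb{R}^{d-1}$) if and only if for all $i\neq j$ in $[C]$ the pair $w^*_i,w^*_j$ is in weak general position.
   Context: The tropical projective torus is $\mathbb{R}^d/\mathbb{R}\mathbf{1}$, $\mathbf{1}=(1,\dots,1)$, identified with $\mathbb{R}^{d-1}$ via $x\mapsto(x_2-x_1,\dots,x_d-x_1)$. Tropical metric: $d_{\rm tr}(x,y)=\max_{i}(x_i-y_i)-\min_i(x_i-y_i)$. A pair of points $p,q\in\mathbb{R}^d/\mathbb{R}\mathbf{1}$ is in weak general position (with respect to the tropical ball) if they do not lie in a common hyperplane parallel to a facet of a tropical ball $\{y:d_{\rm tr}(x,y)\le r\}$, i.e. $p_a-p_b\neq q_a-q_b$ for all $a\neq b$ in $[d]$. $[C]=\{1,\dots,C\}$. *)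

(* Defs.v *)
From HB Require Import structures.
From mathcomp Require Import all_boot all_order all_algebra.
From mathcomp Require Import all_classical all_reals all_analysis.
Set Implicit Arguments. Unset Strict Implicit. Unset Printing Implicit Defensive.
Import Order.TTheory GRing.Theory Num.Theory.
Import numFieldNormedType.Exports.
Local Open Scope classical_set_scope.
Local Open Scope ring_scope.

(* Points of R^d are row vectors 'rV[R]_d; points of the torus R^d/R1 are
   represented by any representative in R^d (all notions below are invariant
   under adding multiples of 1). *)

(* Tropical metric: max_i (x_i - y_i) - min_i (x_i - y_i), written as
   max_{i,j} ((x_i - y_i) - (x_j - y_j)) (equal to it, and 0 when d = 0). *)
Definition tdist (R : realType) (d : nat) (x y : 'rV[R]_d) : R :=
  \big[Num.max/0]_(i < d) \big[Num.max/0]_(j < d)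
     ((x 0 i - y 0 i) - (x 0 j - y 0 j)).

Definition weak_gen_pos (R : realType) (d : nat) (p q : 'rV[R]_d) : Prop :=
  forall a b : 'I_d, a != b -> p 0 a - p 0 b <> q 0 a - q 0 b.

(* Inverse of the identification R^d/R1 -> R^(d-1),
   x |-> (x_2 - x_1, ..., x_d - x_1): y |-> (0, y_1, ..., y_(d-1)). *)
Definition tlift (R : realType) (d : nat) (y : 'rV[R]_(d.-1)) : 'rV[R]_d :=
  \row_(i < d) match nat_of_ord i with
               | 0 => 0
               | k.+1 => odflt 0 (omap (fun j : 'I_(d.-1) => y 0 j) (insub k))
               end.

Definition bisector_set (R : realType) (d C : nat) (w : 'I_C -> 'rV[R]_d)
  : set 'rV[R]_(d.-1) :=
  [set y | exists j j' : 'I_C, j != j' /\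
     tdist (tlift y) (- w j) = tdist (tlift y) (- w j')].

(* Main.v *)
Require Import Defs.
From HB Require Import structures.
From mathcomp Require Import all_boot all_order all_algebra.
From mathcomp Require Import all_classical all_reals all_analysis.
From mathcomp Require Import zify ring lra.
Import Order.TTheory GRing.Theory Num.Theory.
Import numFieldNormedType.Exports.
Local Open Scope classical_set_scope.
Local Open Scope ring_scope.
Set Implicit Arguments. Unset Strict Implicit. Unset Printing Implicit Defensive.

Lemma pow_le_aux k n m : (k < m)%N -> (n < m)%N -> (2^k + 2^n <= 2^m)%N.
Proof.
case: m => // m hk hn.
have h1 : (2^k <= 2^m)%N by rewrite leq_exp2l // -ltnS.
have h2 : (2^n <= 2^m)%N by rewrite leq_exp2l // -ltnS.
rewrite expnS; lia.
Qed.

Lemma pow2_uniq k l m n : k != l -> m != n -> (2^k + 2^n = 2^m + 2^l)%N -> k = m /\ l = n.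
Proof.
wlog kl : k l m n / (l < k)%N.
  move=> H kl mn E; case: (ltngtP l k) => h.
  - exact: H.
  - have [] := H l k n m h; rewrite 1?eq_sym //; lia.
  - by rewrite h eqxx in kl.
move=> _ mn E.
have mn' : (n < m)%N.
  case: (ltngtP n m) => // h; last by rewrite h eqxx in mn.
  have : (2^l < 2^k)%N by rewrite ltn_exp2l.
  have : (2^m < 2^n)%N by rewrite ltn_exp2l.
  lia.
have km : k = m.
  case: (ltngtP k m) => // h.
  - have := pow_le_aux h mn'. have : (0 < 2^l)%N by rewrite expn_gt0. lia.
  - have := pow_le_aux h kl. have : (0 < 2^n)%N by rewrite expn_gt0. lia.
split => //; subst.
apply: (@expnI 2) => //; lia.
Qed.

Section S.
Variable R : realType.

Definition Tm n (u : 'I_n -> R) : R :=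
  \big[Num.max/0]_(i < n) \big[Num.max/0]_(j < n) (u i - u j).

Lemma Tm_ge n (u : 'I_n -> R) i j : u i - u j <= Tm u.
Proof.
have /bigmax_leP[_ h1] := lexx (Tm u).
apply: le_trans (h1 i isT).
have /bigmax_leP[_ h2] := lexx (\big[Num.max/0]_(j < n) (u i - u j)).
exact: h2.
Qed.

Lemma Tm_le n (u : 'I_n -> R) c : 0 <= c -> (forall i j, u i - u j <= c) -> Tm u <= c.
Proof.
move=> c0 h; apply/bigmax_leP; split => // i _; apply/bigmax_leP; split => // j _; exact: h.
Qed.

Lemma eq_Tm n (u u' : 'I_n -> R) : (forall i, u i = u' i) -> Tm u = Tm u'.
Proof. by move=> h; apply: eq_bigr => i _; apply: eq_bigr => j _; rewrite !h. Qed.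

Lemma bigmax_att (I : finType) (P : pred I) (F : I -> R) x0 :
  \big[Num.max/x0]_(i | P i) F i = x0 \/
  exists2 i, P i & \big[Num.max/x0]_(i | P i) F i = F i.
Proof.
elim/big_rec: _ => [|i x Pi [->|[k Pk ->]]]; first by left.
- rewrite maxEle; case: ifP => _; [by left | by right; exists i].
- rewrite maxEle; case: ifP => _; [by right; exists k | by right; exists i].
Qed.

Lemma Tm_att n (u : 'I_n -> R) (i0 : 'I_n) : exists i j, Tm u = u i - u j.
Proof.
have [h|[i _ h]] := bigmax_att xpredT (fun i => \big[Num.max/0]_(j < n) (u i - u j)) 0.
  by exists i0, i0; rewrite /Tm h subrr.
have [h'|[j _ h']] := bigmax_att xpredT (fun j => u i - u j) 0.
  by exists i0, i0; rewrite /Tm h /= h' subrr.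
by exists i, j; rewrite /Tm h /= h'.
Qed.

Lemma argmax_ex (I : finType) (P : pred I) (F : I -> R) i0 : P i0 ->
  exists i, P i /\ forall j, P j -> F j <= F i.
Proof.
move=> Pi0.
have /bigmax_leP[_ h] := lexx (\big[Num.max/F i0]_(i | P i) F i).
have [e|[i Pi e]] := bigmax_att P F (F i0).
  by exists i0; split => // j /h; rewrite e.
by exists i; split => // j /h; rewrite e.
Qed.

Lemma finite_bound (I : finType) (F : I -> R) : exists K, forall i, F i <= K.
Proof.
exists (\big[Num.max/0]_i F i) => i.
have /bigmax_leP[_ h] := lexx (\big[Num.max/0]_i F i).
exact: h.
Qed.

Lemma finite_delta (I : finType) (Q : I -> R -> Prop) :
  (forall i, exists d, 0 < d /\ forall t, 0 < t < d -> Q i t) ->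
  exists d, 0 < d /\ forall i t, 0 < t < d -> Q i t.
Proof.
move=> h.
suff [d [d0 hd]] : exists d, 0 < d /\ forall i t, i \in enum I -> 0 < t < d -> Q i t.
  by exists d; split => // i t; apply: hd; rewrite mem_enum.
elim: (enum I) => [|a s [d [d0 hd]]]; first by exists 1; split.
have [da [da0 ha]] := h a.
exists (Num.min d da); split; first by rewrite lt_min d0 da0.
move=> i t; rewrite inE => /orP[/eqP->|iin] /andP[t0]; rewrite lt_min => /andP[t1 t2].
  by apply: ha; rewrite t0 t2.
by apply: hd => //; rewrite t0 t1.
Qed.

Definition vv (k : nat) : R := (2 ^ k)%:R - 1.

Lemma vv_uniq (k l m n : nat) : k != l -> m != n -> vv k - vv l = vv m - vv n -> k = m /\ l = n.
Proof.
move=> kl mn; rewrite /vv => E.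
apply: pow2_uniq => //.
apply/eqP; rewrite -(eqr_nat R) !natrD; apply/eqP; lra.
Qed.

End S.
Section S2.
Variable R : realType.

Lemma core n (u : 'I_n.+2 -> R) : exists k l, k != l /\ u k - u l = Tm u /\
   exists t0, 0 < t0 /\ forall t, 0 < t -> t < t0 ->
     Tm (fun i => u i + t * vv R i) = Tm u + t * (vv R k - vv R l).
Proof.
pose al (p : 'I_n.+2 * 'I_n.+2) := u p.1 - u p.2.
pose be (p : 'I_n.+2 * 'I_n.+2) := vv R p.1 - vv R p.2.
have [i0 [j0 hT]] := Tm_att u ord0.
have P0 : al (i0, j0) == Tm u by rewrite /al /= hT.
have [q [/eqP hq hmax]] := @argmax_ex R _ (fun p => al p == Tm u) be (i0, j0) P0.
have qoff : q.1 != q.2.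
  apply/negP => /eqP e.
  have T0 : Tm u = 0 by rewrite -hq /al e subrr.
  have a1 := Tm_ge u ord_max ord0. have a2 := Tm_ge u ord0 ord_max.
  rewrite T0 in a1 a2.
  have hm : al (ord_max, ord0) == Tm u by rewrite /al /= T0; apply/eqP; lra.
  have := hmax _ hm; rewrite /be /= e subrr /vv expn0.
  have : (1 < (2 ^ n.+1)%:R :> R) by rewrite ltr1n -{1}(expn0 2) ltn_exp2l.
  lra.
have [t0 [t00 ht0]] : exists t0, 0 < t0 /\ forall p t, 0 < t < t0 ->
    al p + t * be p <= al q + t * be q.
  apply: finite_delta => p.
  have [e|ne] := eqVneq (al p) (Tm u).
    exists 1; split => // t /andP[tp _].
    have hb : be p <= be q by apply: hmax; rewrite e.
    by rewrite hq e lerD2l ler_wpM2l // ltW.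
  have lt : al p < Tm u by rewrite lt_neqAle ne Tm_ge.
  set a := `|be p - be q|.
  have a0 : 0 <= a := normr_ge0 _.
  have ab : be p - be q <= a := ler_norm _.
  have a1 : 0 < a + 1 by lra.
  exists ((Tm u - al p) / (a + 1)); split.
    by apply: divr_gt0 => //; lra.
  move=> t /andP[tp tlt].
  have h1 : t * (a + 1) < Tm u - al p by rewrite -(ltr_pdivlMr _ _ a1).
  have h2 : t * (be p - be q) <= t * a by rewrite ler_wpM2l // ltW.
  rewrite hq; nra.
exists q.1, q.2; split => //; split; first exact: hq.
exists t0; split => // t tp tlt.
have tt : 0 < t < t0 by rewrite tp tlt.
apply/le_anti/andP; split.
- apply: Tm_le.
    move: (ht0 (q.1, q.1) t tt); rewrite /al /be /= !subrr mulr0 addr0 -hq /al.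
    by [].
  move=> i j; move: (ht0 (i, j) t tt); rewrite /al /be /= -hq /al /=.
  have -> : u i + t * vv R i - (u j + t * vv R j) = u i - u j + t * (vv R i - vv R j) by ring.
  by [].
- apply: le_trans (Tm_ge _ q.1 q.2); rewrite -hq /al /=.
  rewrite le_eqVlt; apply/orP; left; apply/eqP; ring.
Qed.

Lemma tlift_lin n (y z : 'rV[R]_n.+1) t (i : 'I_n.+2) :
  @tlift R n.+2 (y + t *: z) 0 i = @tlift R n.+2 y 0 i + t * @tlift R n.+2 z 0 i.
Proof.
rewrite /tlift !mxE; case: i => [[|k] hk] /=; first by rewrite mulr0 addr0.
case: (insub k) => [j|] /=; last by rewrite mulr0 addr0.
by rewrite !mxE.
Qed.

Lemma tlift_entry n (y : 'rV[R]_n.+1) (f : nat -> R) : f 0%N = 0 ->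
  (forall j : 'I_n.+1, y 0 j = f j.+1) -> forall i : 'I_n.+2, @tlift R n.+2 y 0 i = f i.
Proof.
move=> f0 hy [[|k] hk]; rewrite /tlift mxE /=; first by rewrite f0.
case: insubP => [j _ <-|] /=; first exact: hy.
by rewrite -ltnS hk.
Qed.

Lemma tlift_close n (y y' : 'rV[R]_n.+1) e : 0 < e -> (forall j, `|y 0 j - y' 0 j| < e) ->
  forall i, `|@tlift R n.+2 y 0 i - @tlift R n.+2 y' 0 i| < e.
Proof.
move=> e0 h [[|k] hk]; rewrite /tlift !mxE /=; first by rewrite subrr normr0.
case: (insub k) => [j|] /=; first exact: h.
by rewrite subrr normr0.
Qed.

Lemma tdist_T d (x W : 'rV[R]_d) : tdist x (- W) = Tm (fun i => x 0 i + W 0 i).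
Proof.
rewrite /tdist /Tm; apply: eq_bigr => i _; apply: eq_bigr => j _; rewrite !mxE; ring.
Qed.

Lemma Tm_ext n (u : 'I_n -> R) a b : (forall k, u k <= u a) -> (forall k, u b <= u k) ->
  Tm u = u a - u b.
Proof.
move=> ha hb; apply/le_anti/andP; split; last exact: Tm_ge.
apply: Tm_le; first by have := ha b; lra.
by move=> k l; have := ha k; have := hb l; lra.
Qed.

Lemma ballrV n (x y : 'rV[R]_n) e : ball x e y <-> (0 < e /\ forall j, `|x 0 j - y 0 j| < e).
Proof.
split.
  case=> e0 h; split => // j; have := h 0 j. by rewrite -ball_normE /ball_ /=.
case=> e0 h; split => // i j; rewrite ord1 -ball_normE /ball_ /=; exact: h.
Qed.

Lemma interiorP n (A : set 'rV[R]_n) y : interior A y <-> exists2 e, 0 < e & forall z, ball y e z -> A z.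
Proof.
rewrite /interior nbhs_ballP /nbhs_ball /nbhs_ball_ /=.
split; case=> e e0 h; exists e => //.
Qed.

End S2.
Unset Implicit Arguments.
Theorem mainTheorem3 (R : realType) (d C : nat) (hd : (2 <= d)%N)
  (hC : (2 <= C)%N) (w : 'I_C -> 'rV[R]_d) :
  interior (bisector_set w) = set0 <->
  (forall i j : 'I_C, i != j -> weak_gen_pos (w i) (w j)).
Proof.
case: d hd w => [|[|n]] // _ w.
split.
- move=> hI i j hij p q hpq heq.
  have [K hK0] := finite_bound (fun c : 'I_C * 'I_n.+2 => `|w c.1 0 c.2|).
  have hK : forall c k, `|w c 0 k| <= K by move=> c k; exact: (hK0 (c, k)).
  have K0 : 0 <= K by apply: le_trans (hK i p).
  pose tt (k : nat) : R := if k == p then (2 * K + 3) else if k == q then - (2 * K + 3) else 0.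
  pose y0 : 'rV[R]_n.+1 := \row_(k < n.+1) (tt k.+1 - tt 0%N).
  have hx0 : forall i : 'I_n.+2, @tlift R n.+2 y0 0 i = tt i - tt 0%N.
    apply: (tlift_entry (f := fun k => tt k - tt 0%N)); first by rewrite subrr.
    by move=> k; rewrite mxE.
  have ttp : tt p = 2 * K + 3 by rewrite /tt eqxx.
  have ttq : tt q = - (2 * K + 3).
    have hqp : (q == p :> nat) = false by rewrite eq_sym; exact: negbTE hpq.
    by rewrite /tt hqp eqxx.
  suff : interior (bisector_set w) y0 by rewrite hI.
  apply/interiorP; exists 1 => // z /ballrV [_ hz].
  have hc := tlift_close ltr01 hz.
  rewrite /bisector_set /=; exists i, j; split => //.
  have key : forall c, Tm (fun k => @tlift R n.+2 z 0 k + w c 0 k) =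
      (@tlift R n.+2 z 0 p + w c 0 p) - (@tlift R n.+2 z 0 q + w c 0 q).
    move=> c; apply: Tm_ext => k.
    - have := hc k; have := hc p; rewrite !hx0 !ltr_norml => /andP[h1 h2] /andP[h3 h4].
      have := hK c k; have := hK c p; rewrite !ler_norml => /andP[h5 h6] /andP[h7 h8].
      have [->|kp] := eqVneq k p; first lra.
      have kp' : (k == p :> nat) = false by exact: negbTE kp.
      have : tt k <= 0 by rewrite /tt kp'; case: ifP => _; lra.
      lra.
    - have := hc k; have := hc q; rewrite !hx0 !ltr_norml => /andP[h1 h2] /andP[h3 h4].
      have := hK c k; have := hK c q; rewrite !ler_norml => /andP[h5 h6] /andP[h7 h8].
      have [->|kq] := eqVneq k q; first lra.
      have kq' : (k == q :> nat) = false by exact: negbTE kq.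
      have : 0 <= tt k by rewrite /tt kq'; case: ifP => _; lra.
      lra.
  rewrite !tdist_T !key; lra.
- move=> hw; apply/seteqP; split => // y0 /interiorP [e e0 he].
  pose z : 'rV[R]_n.+1 := \row_(k < n.+1) vv R k.+1.
  have hz : forall i : 'I_n.+2, @tlift R n.+2 z 0 i = vv R i.
    apply: (tlift_entry (f := vv R)); first by rewrite /vv expn0 subrr.
    by move=> k; rewrite mxE.
  pose u (c : 'I_C) := fun i => @tlift R n.+2 y0 0 i + w c 0 i.
  have pair : forall c c' : 'I_C, c != c' -> exists δ, 0 < δ /\ forall t, 0 < t < δ ->
      Tm (fun i => u c i + t * vv R i) != Tm (fun i => u c' i + t * vv R i).
    move=> c c' cc'.
    have [k [l [kl [hkl [t1 [t10 ht1]]]]]] := core (u c).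
    have [k' [l' [kl' [hkl' [t2 [t20 ht2]]]]]] := core (u c').
    pose a := Tm (u c) - Tm (u c').
    pose b := (vv R k - vv R l) - (vv R k' - vv R l').
    have m0 : 0 < Num.min t1 t2 by rewrite lt_min t10 t20.
    have m1 : Num.min t1 t2 <= t1 by rewrite ge_min lexx.
    have m2 : Num.min t1 t2 <= t2 by rewrite ge_min lexx orbT.
    have [a0|an0] := eqVneq a 0.
    + have bn0 : b != 0.
        apply/eqP => b0.
        have E : vv R k - vv R l = vv R k' - vv R l' by move: b0; rewrite /b; lra.
        have [ek el] := vv_uniq kl kl' E.
        have ek' : k = k' := val_inj ek.
        have el' : l = l' := val_inj el.
        subst k' l'.
        apply: (hw c c' cc' k l kl).
        move: hkl hkl' a0; rewrite /a /u /=; lra.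
      exists (Num.min t1 t2); split => // t /andP[tp tlt].
      rewrite (ht1 t tp) ?(lt_le_trans tlt) // (ht2 t tp) ?(lt_le_trans tlt) //.
      apply/eqP => E.
      have : t * b = 0 by move: E a0; rewrite /a /b; lra.
      move/eqP; rewrite mulf_eq0 => /orP[/eqP t0|b0]; first lra.
      by rewrite b0 in bn0.
    + have an : 0 < `|a| by rewrite normr_gt0.
      have bn : 0 <= `|b| := normr_ge0 _.
      have b1 : 0 < `|b| + 1 by lra.
      have m3 : 0 < `|a| / (`|b| + 1) by rewrite divr_gt0.
      exists (Num.min (Num.min t1 t2) (`|a| / (`|b| + 1))); split; first by rewrite lt_min m0 m3.
      move=> t /andP[tp]; rewrite lt_min => /andP[tlt tlt'].
      rewrite (ht1 t tp) ?(lt_le_trans tlt) // (ht2 t tp) ?(lt_le_trans tlt) //.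
      apply/eqP => E.
      have Ea : a = - (t * b) by move: E; rewrite /a /b; lra.
      have Eb : `|a| = t * `|b| by rewrite Ea normrN normrM gtr0_norm.
      have h1 : t * (`|b| + 1) < `|a| by rewrite -(ltr_pdivlMr _ _ b1).
      nra.
  have [δ1 [δ10 hδ1]] : exists δ, 0 < δ /\ forall (p : 'I_C * 'I_C) t, 0 < t < δ ->
      p.1 != p.2 -> Tm (fun i => u p.1 i + t * vv R i) != Tm (fun i => u p.2 i + t * vv R i).
    apply: finite_delta => -[c c'] /=.
    have [e'|ne] := eqVneq c c'.
      by exists 1; split => // t _; rewrite e' eqxx.
    have [δ [δ0 h]] := pair c c' ne; exists δ; split => // t ht _; exact: h.
  have [δ2 [δ20 hδ2]] : exists δ, 0 < δ /\ forall (j : 'I_n.+1) t, 0 < t < δ ->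
      t * `|vv R j.+1| < e.
    apply: finite_delta => j.
    have bn : 0 <= `|vv R j.+1| := normr_ge0 _.
    have b1 : 0 < `|vv R j.+1| + 1 by lra.
    exists (e / (`|vv R j.+1| + 1)); split; first by rewrite divr_gt0.
    move=> t /andP[tp tlt].
    have h1 : t * (`|vv R j.+1| + 1) < e by rewrite -(ltr_pdivlMr _ _ b1).
    nra.
  pose m := Num.min δ1 δ2.
  have m0 : 0 < m by rewrite lt_min δ10 δ20.
  have m1 : m <= δ1 by rewrite ge_min lexx.
  have m2 : m <= δ2 by rewrite ge_min lexx orbT.
  pose t := m / 2.
  have ht1 : 0 < t < δ1 by apply/andP; split; rewrite /t; lra.
  have ht2 : 0 < t < δ2 by apply/andP; split; rewrite /t; lra.
  have tp : 0 < t by rewrite /t; lra.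
  have hy : bisector_set w (y0 + t *: z).
    apply: he; apply/ballrV; split => // j; rewrite !mxE.
    rewrite opprD addrA subrr add0r normrN normrM gtr0_norm //.
    exact: hδ2.
  move: hy; rewrite /bisector_set /= => -[c [c' [cc' E]]].
  rewrite !tdist_T in E.
  have E1 : forall c0, Tm (fun i => @tlift R n.+2 (y0 + t *: z) 0 i + w c0 0 i) =
      Tm (fun i => u c0 i + t * vv R i).
    by move=> c0; apply: eq_Tm => i; rewrite tlift_lin hz /u; ring.
  rewrite !E1 in E.
  by have := hδ1 (c, c') t ht1 cc'; rewrite E eqxx.
Qed.
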